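(* Let $\mathcal{P}$ be a finite poset and $f\colon\mathcal{P}\to\{0,1\}$ be $\varepsilon$-far from $k$-monotone. Then the violation hypergraph of $f$ contains a matching of $(k+1)$-uniform hyperedges of size at least $\frac{\varepsilon|\mathcal{P}|}{k+1}$.
   Context: $f\colon\mathcal{P}\to\{0,1\}$ is $k$-monotone if there is no chain $x_1\prec x_2\prec\cdots\prec x_{k+1}$ in $\mathcal{P}$ with $f(x_1)=1$ and $f(x_i)\neq f(x_{i+1})$ for all $i\in[k]$; such a chain is a violation to $k$-monotonicity. $f$ is $\varepsilon$-far from $k$-monotone if the fraction of points on which $f$ differs from any $k$-monotone function is at least $\varepsilon$. The violation hypergraph of $f$ has vertex set $\mathcal{P}$ and a hyperedge $\{x_1,\dots,x_{k+1}\}$ for every violation $x_1\prec\cdots\prec x_{k+1}$. A matching is a set of pairwise disjoint hyperedges. *)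

(* Defs.v *)
From mathcomp Require Import all_boot all_order all_algebra.
Set Implicit Arguments. Unset Strict Implicit. Unset Printing Implicit Defensive.
Import Order.TTheory GRing.Theory Num.Theory.
Local Open Scope order_scope.

Definition is_violation {d} {T : finPOrderType d} (f : T -> bool) (k : nat)
  (s : seq T) : bool :=
  [&& size s == k.+1, sorted <%O s, (if s is x :: _ then f x else false)
    & sorted (fun x y => f x != f y) s].

Definition k_monotone {d} {T : finPOrderType d} (f : T -> bool) (k : nat) : Prop :=
  forall s : seq T, ~~ is_violation f k s.

Definition eps_far {d} {T : finPOrderType d} {R : realFieldType} (f : T -> bool)
  (k : nat) (eps : R) : Prop :=
  forall g : T -> bool, k_monotone g k ->
    (eps <= (#|[set x | f x != g x]|%:R / #|T|%:R))%R.

Definition violation_edge {d} {T : finPOrderType d} (f : T -> bool) (k : nat)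
  (E : {set T}) : Prop :=
  exists s : seq T, is_violation f k s /\ E = [set x in s].

Definition violation_matching {d} {T : finPOrderType d} (f : T -> bool) (k : nat)
  (M : {set {set T}}) : Prop :=
  (forall E, E \in M -> violation_edge f k E) /\ trivIset M.

(* Main.v *)
Require Import Defs.
From mathcomp Require Import all_boot all_order all_algebra.
Import Order.TTheory GRing.Theory Num.Theory.
Set Implicit Arguments. Unset Strict Implicit. Unset Printing Implicit Defensive.

Section Aux.
Variables (d : Order.disp_t) (T : finPOrderType d) (f : T -> bool) (k : nat).
Variable S : {set T}.

Definition chainS (s : seq T) : bool :=
  if s is x :: s' then [&& f x, path <%O x s', path (fun a b => f a != f b) x s'
     & all (fun y => y \in S) s] else false.

Definition Pj (x : T) (j : 'I_k.+1) : bool :=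
  [exists t : (nat_of_ord j).-tuple T, chainS t && (last x t <= x)%O].
Definition a x := \big[maxn/0%N]_(j | Pj x j) (nat_of_ord j).
Definition g x := odd (a x).

Lemma alt_last x s : path (fun a b => f a != f b) x s -> f (last x s) = f x (+) odd (size s).
Proof.
elim: s x => [|y s IH] x /=; first by rewrite addbF.
move=> /andP[ne p]; rewrite IH //.
by move: ne; case: (f x); case: (f y); case: (odd _).
Qed.

Hypothesis noviol : forall s, is_violation f k s -> all (fun x => x \in S) s -> False.

Lemma chainS_len s : chainS s -> size s <= k.
Proof.
case: s => [//|x s] /and4P[fx lt alt allS].
rewrite leqNgt; apply/negP => Hk.
apply: (noviol (s := x :: take k s)).
- by rewrite /is_violation /= size_takel // eqxx fx /= !take_path.
- apply/allP => y; rewrite inE => /orP[/eqP->|/mem_take ys]; apply: (allP allS);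
  by rewrite inE ?eqxx ?ys ?orbT.
Qed.

Lemma le_a x s : chainS s -> (last x s <= x)%O -> size s <= a x.
Proof.
move=> c l.
have H : size s < k.+1 by rewrite ltnS chainS_len.
rewrite /a; apply: (@bigop.bigmax_sup _ (Ordinal H) (Pj x)) => //.
apply/existsP; exists (@Tuple (size s) T s (eqxx _)) => /=.
by rewrite c l.
Qed.

Lemma a_wit x : 0 < a x -> exists s, [/\ chainS s, (last x s <= x)%O & size s = a x].
Proof.
case: (pickP (Pj x)) => [j0 Pj0 | none].
  rewrite /a (bigop.bigmax_eq_arg j0) //.
  case: arg_maxnP => // j /existsP [t /andP[c l]] _ _.
  by exists t; split => //; rewrite size_tuple.
by rewrite /a big_pred0.
Qed.

Lemma a_le x : a x <= k.
Proof. by apply/bigop.bigmax_leqP => j _; rewrite -ltnS ltn_ord. Qed.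

Lemma a_mono x y : (x <= y)%O -> a x <= a y.
Proof.
move=> xy; apply/bigop.bigmax_leqP => j /existsP [t /andP [c l]].
have e : last y t = last x t by move: c; case: (tval t).
have l' : (last y t <= y)%O by rewrite e (le_trans l xy).
by have := le_a c l'; rewrite size_tuple.
Qed.

Lemma g_agree x : x \in S -> g x = f x.
Proof.
move=> xS; rewrite /g. case E: (a x) => [|m].
  case fx: (f x) => //.
  have := le_a (x:=x) (s := [:: x]).
  by rewrite /= fx xS lexx E => /(_ isT isT).
have := a_wit (x:=x); rewrite E => /(_ isT) [s [c l sz]].
case: s c l sz => [//|y s] c l sz.
move: (c) => /and4P[fy lt alt allS].
have par : f (last y s) = odd m.+1.
  by rewrite alt_last // fy -sz /=.
case: (f x =P f (last y s)) => [-> | ne]; first by rewrite par.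
exfalso.
have zx : (last y s < x)%O.
  rewrite lt_neqAle l andbT; apply/eqP => ez; apply: ne; by rewrite ez.
have := le_a (x:=x) (s := y :: rcons s x).
rewrite /= fy !rcons_path lt alt zx /= last_rcons lexx.
rewrite all_rcons xS.
have -> : f (last y s) != f x by apply/eqP => e; apply: ne; rewrite e.
move: allS => /= /andP[-> ->].
by rewrite size_rcons -/(size (y :: s)) sz E => /(_ isT isT); rewrite ltnn.
Qed.

Lemma g_mono_chain x s : path <%O x s -> path (fun a b => g a != g b) x s ->
  a x + size s <= a (last x s).
Proof.
elim: s x => [|y s IH] x /=; first by rewrite addn0.
move=> /andP[xy p1] /andP[gne p2].
have := IH y p1 p2.
have lt : a x < a y.
  rewrite ltn_neqAle a_mono ?ltW // andbT.
  by apply: contra gne; rewrite /g => /eqP ->.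
move=> H; apply: leq_trans H; by rewrite addnS -addSn leq_add2r.
Qed.

Lemma g_kmono : k_monotone g k.
Proof.
move=> s; apply/negP; rewrite /is_violation; case: s => [|x s] /=; first by [].
move/and4P => [sz lt gx alt].
have := g_mono_chain lt alt.
have := a_le (last x s).
have ax : 0 < a x by move: gx; rewrite /g; case: (a x).
move/eqP: sz => [sz] h1 h2; have := leq_trans h2 h1; rewrite sz.
rewrite -{2}(add0n k) leq_add2r leqn0 => /eqP e; by rewrite e in ax.
Qed.

End Aux.

Definition edgeb d (T : finPOrderType d) (f : T -> bool) k (E : {set T}) :=
  [exists t : (k.+1).-tuple T, is_violation f k t && (E == [set x in t])].
Definition matchb d (T : finPOrderType d) (f : T -> bool) k (M : {set {set T}}) :=
  [forall E, (E \in M) ==> edgeb f k E] && trivIset M.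

Lemma card_edge d (T : finPOrderType d) (f : T -> bool) k s :
  is_violation f k s -> #|[set x in s]| = k.+1.
Proof.
move=> /and4P[/eqP sz lt _ _]; rewrite cardsE.
move: lt; rewrite lt_sorted_uniq_le => /andP[u _].
by move/card_uniqP: u => ->; rewrite sz.
Qed.

Local Open Scope ring_scope.

Theorem theoremB5 (d : Order.disp_t) (T : finPOrderType d) (R : realFieldType)
  (f : T -> bool) (k : nat) (eps : R) :
  eps_far f k eps ->
  exists M : {set {set T}}, violation_matching f k M /\
    (forall E, E \in M -> #|E| = k.+1) /\
    eps * #|T|%:R / k.+1%:R <= #|M|%:R.
Proof.
move=> far.
have m0 : matchb f k set0.
  rewrite /matchb; apply/andP; split.
    by apply/forallP => E; rewrite inE.
  by rewrite /trivIset /cover !big_set0 cards0.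
case: (@arg_maxnP _ set0 (@matchb _ _ f k) (fun M => #|M|) m0) =>
  M /andP[/forallP Medges tiM] Mmax.
have Msz : forall E, E \in M -> #|E| = k.+1.
  move=> E EM; move/implyP: (Medges E) => /(_ EM) /existsP [t /andP[v /eqP ->]].
  exact: card_edge v.
exists M; split; [split => // | split => //].
  move=> E EM; move/implyP: (Medges E) => /(_ EM) /existsP [t /andP[v /eqP ->]].
  by exists t.
set S := ~: cover M.
have noviol : forall s, is_violation f k s -> all (fun x => x \in S) s -> False.
  move=> s v allS.
  set E := [set x in s].
  have disj : {in M, forall B : {set T}, [disjoint E & B]}.
    move=> B BM; rewrite disjoint_subset; apply/subsetP => x.
    rewrite inE => xs; have := allP allS x xs; rewrite !inE; apply: contra => xB.
    by apply/bigcupP; exists B.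
  have set0M : set0 \notin M.
    by apply/negP => /Msz; rewrite cards0.
  have [tiM' EnM] := trivIsetU1 disj tiM set0M.
  have : matchb f k (E |: M).
    rewrite /matchb tiM' andbT; apply/forallP => E'; apply/implyP.
    case/setU1P => [-> | E'M]; last by move/implyP: (Medges E') => /(_ E'M).
    move: (v) => /and4P[sz _ _ _].
    apply/existsP; exists (@Tuple k.+1 T s sz) => /=.
    by rewrite v eqxx.
  move/Mmax; rewrite cardsU1 EnM /=.
  by rewrite ltnn.
have gk := g_kmono (f := f) (k := k) (S := S) noviol.
have far' := far _ gk.
have hD : (#|[set x | f x != g f k S x]| <= #|M| * k.+1)%N.
  apply: (@leq_trans #|cover M|).
    apply: subset_leq_card; apply/subsetP => x; rewrite inE.
    case xS : (x \in S); first by rewrite (g_agree noviol xS) eqxx.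
    by move: xS; rewrite inE => /negbFE.
  rewrite -(eqP tiM) -sum_nat_const; apply: eq_leq; apply: eq_bigr => B BM.
  exact: Msz.
case: (posnP #|T|) => [n0 | npos].
  by rewrite n0 mulr0 mul0r ler0n.
move: far'; rewrite ler_pdivlMr ?ltr0n // => far'.
rewrite ler_pdivrMr ?ltr0n //.
apply: (le_trans far').
by rewrite -natrM ler_nat.
Qed.
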